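(* In the Byblos protocol described in the context, if two correct servers both apply to their logs two conflicting, non-cancelled transactions $T_1$ and $T_2$, then they apply them in the same order.
   Context: Byblos protocol. There are $n=4f+1$ servers, at most $f$ Byzantine, the rest correct. Clients are not Byzantine (may crash). Messages between correct parties are eventually delivered, FIFO, authenticated; client messages are signed and unforgeable. Each transaction declares a read set and a write set of keys of a key-value store; two transactions conflict if the write set of one intersects the read or write set of the other. A fixed total order $<$ on transactions (by hash of identifier) is used for tie-breaking. Each correct server keeps: integer $\mathit{clock}$ (initially $0$); sets $\mathit{proposed}[s]$ of pairs $(T,k)$ per server $s$; maps $\mathit{confirmed}[t]$, $\mathit{pending}[t]$ (initially empty); sets $\mathit{committed}$, $\mathit{cancelled}$, $\mathit{resolving}$, $\mathit{ConfirmWitness}[T]$, $\mathit{CancelWitness}[T]$; a $\mathit{log}$; a ledger state; timers $\mathit{timer}[t]$; a timeout constant $\delta$. Client with transaction $T$: broadcasts $\mathrm{Propose}(T)$; waits for $\mathrm{ProposeAck}(T,\cdot)$ from at least $n-f$ servers; sets $\hat t$ to $1$ plus the $(f+1)$-st largest received value (missing values count as $0$); broadcasts $\mathrm{Confirm}(T,\hat t)$; waits for $f+1$ identical $\mathrm{ResolveAck}(T,\mathit{code},\mathit{result})$ and returns $\mathit{result}$ if $\mathit{code}=\mathrm{COMMIT}$, else $\bot$. Correct server: (i) on $\mathrm{Propose}(T)$ from a client, adds $(T,\mathit{clock})$ to $\mathit{proposed}[\mathit{self}]$, sends $\mathrm{Proposed}(T,\mathit{clock})$ to all servers and $\mathrm{ProposeAck}(T,\mathit{clock})$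 to the client; (ii) on $\mathrm{Proposed}(T,k)$ from server $s$, adds $(T,k)$ to $\mathit{proposed}[s]$; (iii) on $\mathrm{Confirm}(T,\hat t)$ from a client or server $s$: $\mathit{clock}:=\max(\mathit{clock},\hat t)$, adds $T$ to $\mathit{confirmed}[\hat t]$, forwards the Confirm to all servers once, adds $s$ to $\mathit{ConfirmWitness}[T]$; if $\mathit{pending}[\hat t]=\emptyset$ and $|\mathit{ConfirmWitness}[T]|=n-f$, sets $\mathit{pending}[\hat t]$ to the set of $T'$ with $(T',k)\in\mathit{proposed}[s']$ for some $s'\in\mathit{ConfirmWitness}[T]$, $k\le\hat t$, and sets $\mathit{timer}[\hat t]$ to expire after $\delta$; if $T\notin\mathit{resolving}$, adds it and starts a resolution of $T$ with input COMMIT; (iv) on $\mathrm{StartResolution}(T,\mathit{code})$ from server $s$ with $T\notin\mathit{resolving}$: if COMMIT, adds $T$ to $\mathit{resolving}$ and starts a resolution with input COMMIT; if CANCEL, adds $s$ to $\mathit{CancelWitness}[T]$ and once it has $\ge f+1$ members, adds $T$ to $\mathit{resolving}$ and starts a resolution with input CANCEL; (v) when $\mathit{timer}[t]$ expires, starts a resolution with input CANCEL for each $T'\in\mathit{pending}[t]$ not in $\mathit{resolving}$ (adding it). A resolution of $T$ sends $\mathrm{StartResolution}(T,\mathit{code})$ to all servers and runs a binary Byzantine consensus instance for $T$ (input $1$ for COMMIT, $0$ for CANCEL) satisfying agreement and validity, and terminating in periods of synchrony; decision $1$ adds $T$ to $\mathit{committed}$, decision $0$ to $\mathit{cancelled}$.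 Apply rule: $\mathrm{OrderBefore}(T,T')$ holds iff $T\in\mathit{confirmed}[t]$ and either $T'\in\mathit{confirmed}[t']$ with $t<t'$, or $T'\in\mathit{confirmed}[t]$ and $T<T'$. The server appends $T$ to its log, applies it to the state, and sends $\mathrm{ResolveAck}(T,\mathrm{COMMIT},\mathit{result})$ to its client when $T\in\mathit{committed}\cap\mathit{confirmed}[t]$, $\mathit{pending}[t]\neq\emptyset$, and every $T'\in\mathit{pending}[t]$ either does not conflict with $T$, is in $\mathit{cancelled}$, is in the log, or satisfies $\mathrm{OrderBefore}(T,T')$. A transaction in $\mathit{cancelled}$ not in the log is appended (without being applied) and $\mathrm{ResolveAck}(T,\mathrm{CANCEL},\bot)$ is sent. *)

(* Defs.v *)
From mathcomp Require Import all_boot.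

Section Byblos.

(* f = max number of Byzantine servers; servers are 'I_n with n = 4f+1 *)
Variable f : nat.
Local Notation Server := 'I_(4 * f + 1).
Local Notation quorum := (4 * f + 1 - f).

(* transactions (with identifiers, hence an eqType) and keys *)
Variable Tx : eqType.
Variable Key : Type.
Variables rset wset : Tx -> Key -> Prop.
Variable ltx : rel Tx.                       (* the fixed total order < on transactions *)
Variable Byz : {set Server}.

Definition conflict (T1 T2 : Tx) : Prop :=
  (exists k, wset T1 k /\ (rset T2 k \/ wset T2 k)) \/
  (exists k, wset T2 k /\ (rset T1 k \/ wset T1 k)).

(* protocol messages exchanged with / between servers.
   MStart T true = StartResolution(T, COMMIT), MStart T false = ... CANCEL *)
Inductive Msg :=
| MPropose of Tx
| MProposed of Tx & nat
| MConfirm of Tx & nat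
| MStart of Tx & bool.

Record SState := mkS {
  clock : nat;
  proposed : Server -> Tx -> nat -> Prop;
  confirmed : nat -> Tx -> Prop;
  pending : nat -> Tx -> Prop;
  timer : nat -> bool;                       (* timer[t] armed, not yet expired *)
  cwit : Tx -> {set Server};
  xwit : Tx -> {set Server};
  forwarded : Tx -> nat -> Prop;
  resolving : Tx -> Prop;
  rinput : Tx -> bool -> Prop;               (* input of the resolution of T (true = COMMIT) *)
  decided : Tx -> bool -> Prop;              (* decision of the consensus for T:
                                                true = committed, false = cancelled *)
  log : seq (Tx * bool)                      (* (T,true) applied, (T,false) cancelled *)
}.

Definition committed (σ : SState) T := decided σ T true.
Definition cancelled (σ : SState) T := decided σ T false.
Definition in_log (σ : SState) T := exists b, (T, b) \in log σ.

Definition add_proposed (σ : SState) (s : Server) (T : Tx) (k : nat) : SState :=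
  mkS (clock σ)
      (fun s' T' k' => (s' = s /\ T' = T /\ k' = k) \/ proposed σ s' T' k')
      (confirmed σ) (pending σ) (timer σ) (cwit σ) (xwit σ) (forwarded σ)
      (resolving σ) (rinput σ) (decided σ) (log σ).

(* first part of handling Confirm(T,t) from [from] (None = the client):
   clock := max(clock,t), T added to confirmed[t], sender added to ConfirmWitness[T] *)
Definition confirm_core (σ : SState) (from : option Server) (T : Tx) (t : nat) : SState :=
  mkS (maxn (clock σ) t) (proposed σ)
      (fun t' T' => (t' = t /\ T' = T) \/ confirmed σ t' T')
      (pending σ) (timer σ)
      (fun T' => if (T' == T) then
                   (if from is Some s then s |: cwit σ T' else cwit σ T')
                 else cwit σ T')
      (xwit σ) (forwarded σ) (resolving σ) (rinput σ) (decided σ) (log σ).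

Definition mark_forwarded (σ : SState) (T : Tx) (t : nat) : SState :=
  mkS (clock σ) (proposed σ) (confirmed σ) (pending σ) (timer σ) (cwit σ) (xwit σ)
      (fun T' t' => (T' = T /\ t' = t) \/ forwarded σ T' t')
      (resolving σ) (rinput σ) (decided σ) (log σ).

Definition pending_of (σ : SState) (T : Tx) (t : nat) : Tx -> Prop :=
  fun T' => exists s k, s \in cwit σ T /\ proposed σ s T' k /\ k <= t.

Definition set_pending (σ : SState) (t : nat) (P : Tx -> Prop) : SState :=
  mkS (clock σ) (proposed σ) (confirmed σ)
      (fun t' => if t' == t then P else pending σ t')
      (fun t' => if t' == t then true else timer σ t')
      (cwit σ) (xwit σ) (forwarded σ) (resolving σ) (rinput σ) (decided σ) (log σ).

Definition start_res (σ : SState) (T : Tx) (b : bool) : SState :=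
  mkS (clock σ) (proposed σ) (confirmed σ) (pending σ) (timer σ) (cwit σ) (xwit σ)
      (forwarded σ)
      (fun T' => T' = T \/ resolving σ T')
      (fun T' b' => (T' = T /\ b' = b) \/ rinput σ T' b')
      (decided σ) (log σ).

Definition start_all (σ : SState) (ts : seq Tx) (b : bool) : SState :=
  foldl (fun σ T => start_res σ T b) σ ts.

Definition add_xwit (σ : SState) (T : Tx) (s : Server) : SState :=
  mkS (clock σ) (proposed σ) (confirmed σ) (pending σ) (timer σ) (cwit σ)
      (fun T' => if T' == T then s |: xwit σ T' else xwit σ T')
      (forwarded σ) (resolving σ) (rinput σ) (decided σ) (log σ).

Definition expire (σ : SState) (t : nat) : SState :=
  mkS (clock σ) (proposed σ) (confirmed σ) (pending σ)
      (fun t' => if t' == t then false else timer σ t')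
      (cwit σ) (xwit σ) (forwarded σ) (resolving σ) (rinput σ) (decided σ) (log σ).

Definition decide (σ : SState) (T : Tx) (v : bool) : SState :=
  mkS (clock σ) (proposed σ) (confirmed σ) (pending σ) (timer σ) (cwit σ) (xwit σ)
      (forwarded σ) (resolving σ) (rinput σ)
      (fun T' v' => (T' = T /\ v' = v) \/ decided σ T' v') (log σ).

Definition append_log (σ : SState) (e : Tx * bool) : SState :=
  mkS (clock σ) (proposed σ) (confirmed σ) (pending σ) (timer σ) (cwit σ) (xwit σ)
      (forwarded σ) (resolving σ) (rinput σ) (decided σ) (rcons (log σ) e).

Inductive fwd_step (σ : SState) (T : Tx) (t : nat) : SState -> seq Msg -> Prop :=
| FwdNew : ~ forwarded σ T t -> fwd_step σ T t (mark_forwarded σ T t) [:: MConfirm T t]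
| FwdOld : forwarded σ T t -> fwd_step σ T t σ [::].

Inductive pend_step (σ : SState) (T : Tx) (t : nat) : SState -> Prop :=
| PSet : (forall T', ~ pending σ t T') -> #|cwit σ T| = quorum ->
         pend_step σ T t (set_pending σ t (pending_of σ T t))
| PSkip : ~ ((forall T', ~ pending σ t T') /\ #|cwit σ T| = quorum) ->
          pend_step σ T t σ.

Inductive commit_step (σ : SState) (T : Tx) : SState -> seq Msg -> Prop :=
| CSStart : ~ resolving σ T -> commit_step σ T (start_res σ T true) [:: MStart T true]
| CSSkip : resolving σ T -> commit_step σ T σ [::].

Inductive cancel_step (σ : SState) (T : Tx) : SState -> seq Msg -> Prop :=
| XStart : f.+1 <= #|xwit σ T| -> cancel_step σ T (start_res σ T false) [:: MStart T false]
| XWait : #|xwit σ T| < f.+1 -> cancel_step σ T σ [::].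

(* reception of message m by correct server self, from [from] (None = the
   client of the transaction).  Outputs: new state, messages broadcast to all
   servers, and possibly a ProposeAck(T,k) sent to the client. *)
Inductive srecv (self : Server) :
  option Server -> Msg -> SState -> SState -> seq Msg -> option (Tx * nat) -> Prop :=
| RPropose T σ :
    srecv self None (MPropose T) σ (add_proposed σ self T (clock σ))
          [:: MProposed T (clock σ)] (Some (T, clock σ))
| RProposed s T k σ :
    srecv self (Some s) (MProposed T k) σ (add_proposed σ s T k) [::] None
| RConfirm from T t σ σ1 o1 σ2 σ3 o3 :
    fwd_step (confirm_core σ from T t) T t σ1 o1 ->
    pend_step σ1 T t σ2 ->
    commit_step σ2 T σ3 o3 ->
    srecv self from (MConfirm T t) σ σ3 (o1 ++ o3) None
| RStartIgnore s T b σ :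
    resolving σ T -> srecv self (Some s) (MStart T b) σ σ [::] None
| RStartCommit s T σ :
    ~ resolving σ T ->
    srecv self (Some s) (MStart T true) σ (start_res σ T true) [:: MStart T true] None
| RStartCancel s T σ σ' o :
    ~ resolving σ T -> cancel_step (add_xwit σ T s) T σ' o ->
    srecv self (Some s) (MStart T false) σ σ' o None.

Definition order_before (σ : SState) (T T' : Tx) : Prop :=
  exists t, confirmed σ t T /\
    ((exists t', confirmed σ t' T' /\ t < t') \/ (confirmed σ t T' /\ ltx T T')).

Inductive slocal : SState -> SState -> seq Msg -> Prop :=
| LTimer t ts σ :
    timer σ t -> uniq ts ->
    (forall T, T \in ts <-> pending σ t T /\ ~ resolving σ T) ->
    slocal σ (start_all (expire σ t) ts false) [seq MStart T false | T <- ts]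
| LApply T t σ :
    committed σ T -> confirmed σ t T -> (exists T', pending σ t T') ->
    ~ in_log σ T ->
    (forall T', pending σ t T' ->
       ~ conflict T T' \/ cancelled σ T' \/ in_log σ T' \/ order_before σ T T') ->
    slocal σ (append_log σ (T, true)) [::]
| LCancel T σ :
    cancelled σ T -> ~ in_log σ T ->
    slocal σ (append_log σ (T, false)) [::].

Record World := mkW {
  sst : Server -> SState;                     (* states of the servers (used for correct ones) *)
  chan : Server -> Server -> seq Msg;         (* FIFO channel src -> dst *)
  cchan : Tx -> Server -> seq Msg;            (* FIFO channel client of T -> dst *)
  acked : Tx -> Server -> nat -> Prop;        (* correct server sent ProposeAck(T,k) *)
  cproposed : Tx -> bool;
  cconfirm : Tx -> option nat                 (* client of T signed/broadcast Confirm(T,t^) *)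
}.

Definition upd_s (w : World) (s : Server) (σ : SState) : World :=
  mkW (fun s' => if s' == s then σ else sst w s') (chan w) (cchan w) (acked w)
      (cproposed w) (cconfirm w).

Definition bcast (w : World) (s : Server) (out : seq Msg) : World :=
  mkW (sst w) (fun a b => if a == s then chan w a b ++ out else chan w a b)
      (cchan w) (acked w) (cproposed w) (cconfirm w).

Definition send1 (w : World) (a b : Server) (m : Msg) : World :=
  mkW (sst w) (fun a' b' => if (a' == a) && (b' == b) then rcons (chan w a' b') m
                            else chan w a' b')
      (cchan w) (acked w) (cproposed w) (cconfirm w).

Definition pop_chan (w : World) (a b : Server) (rest : seq Msg) : World :=
  mkW (sst w) (fun a' b' => if (a' == a) && (b' == b) then rest else chan w a' b')
      (cchan w) (acked w) (cproposed w) (cconfirm w).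

Definition pop_cchan (w : World) (T : Tx) (b : Server) (rest : seq Msg) : World :=
  mkW (sst w) (chan w) (fun T' b' => if (T' == T) && (b' == b) then rest else cchan w T' b')
      (acked w) (cproposed w) (cconfirm w).

Definition record_ack (w : World) (s : Server) (ack : option (Tx * nat)) : World :=
  if ack is Some (T, k) then
    mkW (sst w) (chan w) (cchan w)
        (fun T' s' k' => (T' = T /\ s' = s /\ k' = k) \/ acked w T' s' k')
        (cproposed w) (cconfirm w)
  else w.

Definition after_recv (w : World) (s : Server) (σ : SState) (out : seq Msg)
    (ack : option (Tx * nat)) : World :=
  record_ack (bcast (upd_s w s σ) s out) s ack.

Definition client_propose (w : World) (T : Tx) : World :=
  mkW (sst w) (chan w)
      (fun T' b => if T' == T then rcons (cchan w T' b) (MPropose T) else cchan w T' b)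
      (acked w) (fun T' => (T' == T) || cproposed w T') (cconfirm w).

Definition client_confirm (w : World) (T : Tx) (t : nat) : World :=
  mkW (sst w) (chan w)
      (fun T' b => if T' == T then rcons (cchan w T' b) (MConfirm T t) else cchan w T' b)
      (acked w) (cproposed w) (fun T' => if T' == T then Some t else cconfirm w T').

(* t^ = 1 + the (f+1)-st largest received value, missing values counting as 0 *)
Definition hat_t (S : {set Server}) (K : Server -> nat) : nat :=
  (nth 0 (sort geq [seq (if s \in S then K s else 0) | s <- enum Server]) f).+1.

(* messages a Byzantine server may send: anything except client messages;
   a Confirm must carry the (unforgeable) signature of the client *)
Definition byz_msg (w : World) (m : Msg) : Prop :=
  match m with
  | MPropose _ => False
  | MConfirm T t => cconfirm w T = Some t
  | _ => True
  end.

Inductive step : World -> World -> Prop :=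
| StClientPropose T w :
    ~~ cproposed w T -> step w (client_propose w T)
| StClientConfirm T (S : {set Server}) (K : Server -> nat) w :
    cproposed w T -> cconfirm w T = None -> quorum <= #|S| ->
    (forall s, s \in S -> s \notin Byz -> acked w T s (K s)) ->
    step w (client_confirm w T (hat_t S K))
| StRecvClient T s m rest σ' out ack w :
    s \notin Byz -> cchan w T s = m :: rest ->
    srecv s None m (sst w s) σ' out ack ->
    step w (after_recv (pop_cchan w T s rest) s σ' out ack)
| StRecvServer a s m rest σ' out ack w :
    s \notin Byz -> chan w a s = m :: rest ->
    srecv s (Some a) m (sst w s) σ' out ack ->
    step w (after_recv (pop_chan w a s rest) s σ' out ack)
| StLocal s σ' out w :
    s \notin Byz -> slocal (sst w s) σ' out ->
    step w (bcast (upd_s w s σ') s out)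
| StDecide s T v w :
    s \notin Byz -> resolving (sst w s) T -> (forall v', ~ decided (sst w s) T v') ->
    (* agreement *)
    (forall s' v', s' \notin Byz -> decided (sst w s') T v' -> v' = v) ->
    (* validity: the decided value is the input of some correct server *)
    (exists2 s', s' \notin Byz & rinput (sst w s') T v) ->
    step w (upd_s w s (decide (sst w s) T v))
| StByz b s m w :
    b \in Byz -> byz_msg w m -> step w (send1 w b s m).

Definition init_s : SState :=
  mkS 0 (fun _ _ _ => False) (fun _ _ => False) (fun _ _ => False) (fun _ => false)
      (fun _ => set0) (fun _ => set0) (fun _ _ => False) (fun _ => False)
      (fun _ _ => False) (fun _ _ => False) [::].

Definition init_w : World :=
  mkW (fun _ => init_s) (fun _ _ => [::]) (fun _ _ => [::]) (fun _ _ _ => False)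
      (fun _ => false) (fun _ => None).

Inductive reachable : World -> Prop :=
| RInit : reachable init_w
| RStep w w' : reachable w -> step w w' -> reachable w'.

End Byblos.

Definition before {A : Type} (l : seq A) (x y : A) : Prop :=
  exists l1 l2 l3, l = l1 ++ x :: l2 ++ y :: l3.

(* Main.v *)
Require Import Defs.
From mathcomp Require Import all_boot zify.
From Stdlib Require List Classical_Prop.

Lemma geq_trans : transitive geq. Proof. by move=> a b c h1 h2; exact: leq_trans h2 h1. Qed.
Lemma sorted_geq_drop (l : seq nat) f : sorted geq l -> f < size l ->
  forall x, x \in drop f l -> x <= nth 0 l f.
Proof.
move=> so hf x.
have : sorted geq (drop f l) by apply: (subseq_sorted geq_trans (drop_subseq l f)).
rewrite (drop_nth 0 hf) /= => /(order_path_min geq_trans) /allP H.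
by rewrite inE => /orP [/eqP ->|/H].
Qed.

Lemma count_gt_nth (l : seq nat) f : sorted geq l -> f < size l ->
  count (fun x => nth 0 l f < x) l <= f.
Proof.
move=> so hf; move: (nth 0 l f) (@sorted_geq_drop l f so hf) => m Hm.
rewrite -(cat_take_drop f l) count_cat.
have -> : count (fun x => m < x) (drop f l) = 0.
  apply/eqP; rewrite -leqn0 leqNgt -has_count; apply/hasP => -[x /Hm].
  by rewrite ltnNge => ->.
by rewrite addn0 (leq_trans (count_size _ _)) // size_take; case: ifP => //; rewrite ltnNge => /negbFE.
Qed.

Lemma card_count (T:finType) (P : pred T) : #|[set x | P x]| = count P (enum T).
Proof. rewrite cardsE cardE /enum_mem size_filter /enum_mem /= filter_predT. by apply: eq_count. Qed.

Lemma hat_t_prop f (S : {set 'I_(4 * f + 1)}) K : 4 * f + 1 - f <= #|S| ->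
  exists A : {set 'I_(4 * f + 1)}, 2 * f + 1 <= #|A| /\ A \subset S /\ forall s, s \in A -> K s < hat_t f S K.
Proof.
move=> hS.
set v := fun s : 'I_(4*f+1) => if s \in S then K s else 0.
set l := sort geq [seq v s | s <- enum 'I_(4*f+1)].
set m := nth 0 l f.
have szl : size l = 4 * f + 1 by rewrite size_sort size_map -cardE card_ord.
have sol : sorted geq l by apply: sort_sorted => x y; exact: leq_total.
have hB : #|[set s | m < v s]| <= f.
  rewrite card_count.
  have := @count_gt_nth l f sol; rewrite szl -/m => /(_ ltac:(lia)).
  rewrite /l; have /permP -> := permEl (perm_sort geq [seq v s | s <- enum 'I_(4*f+1)]).
  by rewrite count_map.
exists [set s in S | K s < hat_t f S K]; split; last split.
- set A := [set s in S | K s < hat_t f S K]; set B := [set s | m < v s].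
  have H1 : S \subset A :|: B.
    apply/subsetP => s sS; rewrite !inE sS /= /v sS /hat_t -/v -/l -/m ltnS.
    by case: leqP.
  have H3 := leq_trans hS (leq_trans (subset_leq_card H1) (leq_card_setU A B)).
  have H5 : #|A| + #|B| <= #|A| + f by rewrite leq_add2l.
  have H4 := leq_trans H3 H5.
  move: H4; clear; lia.
- by apply/subsetP => s; rewrite inE => /andP [].
- by move=> s; rewrite inE => /andP [].
Qed.

Section Proof.
Variable f : nat.
Variable Tx : eqType.
Variable Key : Type.
Variables rset wset : Tx -> Key -> Prop.
Variable ltx : rel Tx.
Variable Byz : {set 'I_(4 * f + 1)}.

Arguments clock {f Tx}. Arguments proposed {f Tx}. Arguments confirmed {f Tx}.
Arguments pending {f Tx}. Arguments timer {f Tx}. Arguments cwit {f Tx}.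
Arguments xwit {f Tx}. Arguments forwarded {f Tx}. Arguments resolving {f Tx}.
Arguments rinput {f Tx}. Arguments decided {f Tx}. Arguments log {f Tx}.
Arguments committed {f Tx}. Arguments cancelled {f Tx}. Arguments in_log {f Tx}.
Arguments confirm_core {f Tx}. Arguments pending_of {f Tx}.
Arguments start_res {f Tx}. Arguments start_all {f Tx}. Arguments append_log {f Tx}.
Arguments sst {f Tx}. Arguments chan {f Tx}. Arguments cchan {f Tx}.
Arguments acked {f Tx}. Arguments cproposed {f Tx}. Arguments cconfirm {f Tx}.
Arguments MPropose {Tx}. Arguments MProposed {Tx}. Arguments MConfirm {Tx}. Arguments MStart {Tx}.

Local Notation Server := 'I_(4 * f + 1).
Local Notation quorum := (4 * f + 1 - f).
Local Notation SS := (SState f Tx).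
Local Notation WW := (World f Tx).
Local Notation Msg := (Msg Tx).
Local Notation correct s := (s \notin Byz).
Local Notation srecv := (srecv f Tx).
Local Notation slocal := (slocal f Tx Key rset wset ltx).
Local Notation step := (step f Tx Key rset wset ltx Byz).
Local Notation conflict := (conflict Tx Key rset wset).
Local Notation In := List.In.

Definition GoodW (w : WW) (t : nat) (P : Tx -> Prop) :=
  exists W : {set Server}, quorum <= #|W| /\
    forall a, a \in W -> correct a -> t <= clock (sst w a) /\
      forall T' k, acked w T' a k -> k < t -> P T'.

Definition lexlt (t1 : nat) (T1 : Tx) (t2 : nat) (T2 : Tx) :=
  t1 < t2 \/ (t1 = t2 /\ ltx T1 T2).

Record InvF (w : WW) : Prop := {
  i_cc1 : forall T t, cconfirm w T = Some t -> exists A : {set Server},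
      2 * f + 1 <= #|A| /\ forall a, a \in A -> correct a -> exists k, acked w T a k /\ k < t;
  i_cc2 : forall a b T t, In (MConfirm T t) (chan w a b) -> cconfirm w T = Some t;
  i_cc3 : forall T' b T t, In (MConfirm T t) (cchan w T' b) -> cconfirm w T = Some t;
  i_conf : forall s t T, correct s -> confirmed (sst w s) t T -> cconfirm w T = Some t;
  i_C1 : forall a s T k, correct a -> correct s -> acked w T a k ->
      proposed (sst w s) a T k \/ In (MProposed T k) (chan w a s);
  i_C2 : forall a s p q T t, correct a -> correct s -> chan w a s = p ++ MConfirm T t :: q ->
      t <= clock (sst w a) /\ forall T' k, acked w T' a k -> k < t ->
        proposed (sst w s) a T' k \/ In (MProposed T' k) p;
  i_C3 : forall s a T, correct s -> correct a -> a \in cwit (sst w s) T ->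
      exists t, cconfirm w T = Some t /\ t <= clock (sst w a) /\
        forall T' k, acked w T' a k -> k < t -> proposed (sst w s) a T' k;
  i_C4 : forall s t T0, correct s -> pending (sst w s) t T0 -> GoodW w t (pending (sst w s) t)
}.

Record InvL (w : WW) : Prop := {
  i_dec : forall s s' T v v', correct s -> correct s' ->
      decided (sst w s) T v -> decided (sst w s') T v' -> v = v';
  i_log1 : forall s T, correct s -> (T, true) \in log (sst w s) ->
      committed (sst w s) T /\ exists t, cconfirm w T = Some t;
  i_uniq : forall s, correct s -> uniq (map fst (log (sst w s)));
  i_log : forall s p q T2 T1, correct s -> log (sst w s) = p ++ (T2, true) :: q ->
      T1 != T2 -> conflict T2 T1 -> (forall b, (T1, b) \notin p) ->
      cancelled (sst w s) T1 \/
      (exists t2 t1, cconfirm w T2 = Some t2 /\ cconfirm w T1 = Some t1 /\ lexlt t2 T2 t1 T1) \/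
      (exists t2, cconfirm w T2 = Some t2 /\ GoodW w t2 (fun T' => T' <> T1))
}.

Arguments i_cc1 {w}. Arguments i_cc2 {w}. Arguments i_cc3 {w}. Arguments i_conf {w}.
Arguments i_C1 {w}. Arguments i_C2 {w}. Arguments i_C3 {w}. Arguments i_C4 {w}.
Arguments i_dec {w}. Arguments i_log1 {w}. Arguments i_uniq {w}. Arguments i_log {w}.

Definition Mono (w w' : WW) :=
  [/\ (forall a, correct a -> clock (sst w a) <= clock (sst w' a)),
      (forall T a k, acked w' T a k -> acked w T a k \/ clock (sst w a) <= k),
      (forall T a k, acked w T a k -> acked w' T a k),
      (forall T t, cconfirm w T = Some t -> cconfirm w' T = Some t) &
      (forall x T v, correct x -> decided (sst w x) T v -> decided (sst w' x) T v)].

Lemma acked_lift w w' a t T k : Mono w w' -> t <= clock (sst w a) ->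
  acked w' T a k -> k < t -> acked w T a k.
Proof. case=> _ H _ _ _ ht /H [//|hk] hkt; lia. Qed.

Lemma GoodW_lift w w' t (P Q : Tx -> Prop) : Mono w w' -> (forall x, P x -> Q x) ->
  GoodW w t P -> GoodW w' t Q.
Proof.
move=> M PQ [W [hW HW]]; exists W; split=> // a aW ca.
have [ht HP] := HW a aW ca.
split; first by case: M => H _ _ _ _; exact: leq_trans ht (H a ca).
move=> T' k hk' hkt; apply: PQ; apply: (HP T' k _ hkt); exact: (@acked_lift w w' a t T' k M ht hk' hkt).
Qed.


Arguments GoodW_lift {w w' t P Q}.

Record LSum (s : Server) (from : option Server) (mo : option Msg) (σ σ' : SS)
    (out : seq Msg) (ack : option (Tx * nat)) : Prop := {
  ls_clock : clock σ <= clock σ';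
  ls_prop : forall x T k, proposed σ x T k -> proposed σ' x T k;
  ls_propP : forall a T k, from = Some a -> mo = Some (MProposed T k) -> proposed σ' a T k;
  ls_conf : forall t T, confirmed σ' t T -> confirmed σ t T \/ mo = Some (MConfirm T t);
  ls_cwit : forall T x, x \in cwit σ' T -> x \in cwit σ T \/
      (from = Some x /\ exists t, mo = Some (MConfirm T t));
  ls_pend : forall t, (forall x, pending σ' t x <-> pending σ t x) \/
     (exists T, mo = Some (MConfirm T t) /\ #|cwit (confirm_core σ from T t) T| = quorum /\
        forall x, pending_of (confirm_core σ from T t) T t x -> pending σ' t x);
  ls_outC : forall T t, In (MConfirm T t) out -> mo = Some (MConfirm T t) /\ t <= clock σ';
  ls_outP : forall T, mo = Some (MPropose T) -> In (MProposed T (clock σ)) out;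
  ls_ack : forall T k, ack = Some (T, k) -> mo = Some (MPropose T) /\ k = clock σ
}.

Arguments ls_clock {s from mo σ σ' out ack}. Arguments ls_prop {s from mo σ σ' out ack}.
Arguments ls_propP {s from mo σ σ' out ack}. Arguments ls_conf {s from mo σ σ' out ack}.
Arguments ls_cwit {s from mo σ σ' out ack}. Arguments ls_pend {s from mo σ σ' out ack}.
Arguments ls_outC {s from mo σ σ' out ack}. Arguments ls_outP {s from mo σ σ' out ack}.
Arguments ls_ack {s from mo σ σ' out ack}.

Lemma srecv_sum s from m σ σ' out ack : srecv s from m σ σ' out ack ->
  [/\ LSum s from (Some m) σ σ' out ack, log σ' = log σ &
      forall T v, decided σ' T v <-> decided σ T v].
Proof.
case.
-
  move=> T {}σ; split=> //; split=> //=.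
  + by move=> x T0 k H; right.
  + by move=> t T0 H; left.
  + by move=> T0 x H; left.
  + by move=> t; left.
  + by move=> T0 t [].
  + by move=> T0 [->]; left.
  + by move=> T0 k [-> ->].
-
  move=> a T k {}σ; split=> //; split=> //=.
  + by move=> x T0 k0 H; right.
  + by move=> a0 T0 k0 [->] [-> ->]; left.
  + by move=> t T0 H; left.
  + by move=> T0 x H; left.
  + by move=> t; left.
-
  move=> fr T t {}σ σ1 o1 σ2 σ3 o3 hf hp hc.
  have E1 : (clock σ1 = maxn (clock σ) t /\ proposed σ1 = proposed σ /\
       confirmed σ1 = confirmed (confirm_core σ fr T t) /\ pending σ1 = pending σ /\
       cwit σ1 = cwit (confirm_core σ fr T t) /\ log σ1 = log σ /\ decided σ1 = decided σ)
    by case: hf.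
  have O1 : forall M, In M o1 -> M = MConfirm T t by case: hf => [_ M [<-|[]]|_ M []].
  have E3 : (clock σ3 = clock σ2 /\ proposed σ3 = proposed σ2 /\ confirmed σ3 = confirmed σ2 /\
       pending σ3 = pending σ2 /\ cwit σ3 = cwit σ2 /\ log σ3 = log σ2 /\ decided σ3 = decided σ2)
    by case: hc.
  have O3 : forall M, In M o3 -> exists b, M = MStart T b by case: hc => [_ M [<-|[]]|_ M []]; eauto.
  case: E1 => c1 [p1 [f1 [pe1 [w1 [l1 d1]]]]]; case: E3 => c3 [p3 [f3 [pe3 [w3 [l3 d3]]]]].
  have E2 : (clock σ2 = clock σ1 /\ proposed σ2 = proposed σ1 /\ confirmed σ2 = confirmed σ1 /\
       cwit σ2 = cwit σ1 /\ log σ2 = log σ1 /\ decided σ2 = decided σ1) by case: hp.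
  case: E2 => c2 [p2 [f2 [w2 [l2 d2]]]].
  split; last first.
  + by move=> T0 v; rewrite d3 d2 d1.
  + by rewrite l3 l2 l1.
  split.
  + by rewrite c3 c2 c1 leq_maxl.
  + by move=> x T0 k; rewrite p3 p2 p1.
  + by [].
  + move=> t0 T0; rewrite f3 f2 f1 /= => -[[-> ->]|H]; [by right|by left].
  + move=> T0 x; rewrite w3 w2 w1 /=; case: eqP => [->|]; last by left.
    case: fr {hf hp hc w1 f1} => [a|]; last by left.
    by rewrite in_setU1 => /orP [/eqP ->|]; [right; split=> //; exists t|left].
  + move=> t0; rewrite pe3.
    case: hp => [Hemp Hq|Hn].
    * case: (eqVneq t0 t) => [->|ne].
      - right; exists T; split=> //; split; first by rewrite -Hq w1.
        by move=> x /=; rewrite eqxx /pending_of w1 p1.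
      - by left => x /=; rewrite (negbTE ne) pe1.
    * by left => x; rewrite pe1.
  + move=> T0 t0 H; case: (List.in_app_or _ _ _ H) => [/O1 [-> ->]|/O3 [b //]].
    by split=> //; rewrite c3 c2 c1 leq_maxr.
  + by [].
  + by [].
-
  move=> a T b {}σ _; split=> //; split=> //.
  + by move=> t T0 H; left.
  + by move=> T0 x H; left.
  + by move=> t; left.
-
  move=> a T {}σ _; split=> //; split=> //.
  + by move=> t T0 H; left.
  + by move=> T0 x H; left.
  + by move=> t; left.
  + by move=> T0 t [H|[]]; discriminate.
-
  move=> a T {}σ σ2 o _ hc.
  have E : (clock σ2 = clock σ /\ proposed σ2 = proposed σ /\ confirmed σ2 = confirmed σ /\
       pending σ2 = pending σ /\ cwit σ2 = cwit σ /\ log σ2 = log σ /\ decided σ2 = decided σ)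
    by case: hc.
  have O : forall M, In M o -> M = MStart T false by case: hc => [_ M [<-|[]]|_ M []].
  case: E => c [p [fc [pe [w [l d]]]]].
  split; [split| |]; rewrite ?c ?p ?fc ?pe ?w ?l ?d //.
  + by move=> t T0 H; left.
  + by move=> T0 x H; left.
  + by move=> t; left.
  + by move=> T0 t /O.
Qed.

Lemma start_all_fields ts b (σ : SS) :
  let σ' := start_all σ ts b in
  clock σ' = clock σ /\ proposed σ' = proposed σ /\ confirmed σ' = confirmed σ /\
  pending σ' = pending σ /\ cwit σ' = cwit σ /\ log σ' = log σ /\ decided σ' = decided σ.
Proof. by elim: ts σ => [|T ts IH] σ //=; have := IH (start_res σ T b). Qed.

Definition apply_ok (σ : SS) (T : Tx) :=
  exists t, committed σ T /\ confirmed σ t T /\ (exists T', pending σ t T') /\ ~ in_log σ T /\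
    (forall T', pending σ t T' ->
       ~ conflict T T' \/ cancelled σ T' \/ in_log σ T' \/ order_before f Tx ltx σ T T').

Lemma slocal_sum s fr σ σ' out : slocal σ σ' out ->
  [/\ LSum s fr None σ σ' out None, forall T v, decided σ' T v <-> decided σ T v &
      log σ' = log σ \/ (exists T, log σ' = rcons (log σ) (T, true) /\ apply_ok σ T) \/
      (exists T, log σ' = rcons (log σ) (T, false) /\ ~ in_log σ T)].
Proof.
case.
- move=> t ts {}σ _ _ _.
  have [c [p [fc [pe [w [l d]]]]]] := start_all_fields ts false (expire f Tx σ t).
  split; [split| |]; rewrite ?c ?p ?fc ?pe ?w ?l ?d //.
  + by move=> t0 T0 H; left.
  + by move=> T0 x H; left.
  + by move=> t0; left.
  + by move=> T0 t0 /List.in_map_iff [x [H _]].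
  + by left.
- move=> T t {}σ H1 H2 H3 H4 H5; split; [split| |] => //.
  + by move=> t0 T0 H; left.
  + by move=> T0 x H; left.
  + by move=> t0; left.
  + by right; left; exists T; split=> //; exists t.
- move=> T {}σ H1 H2; split; [split| |] => //.
  + by move=> t0 T0 H; left.
  + by move=> T0 x H; left.
  + by move=> t0; left.
  + by right; right; exists T.
Qed.

Lemma decide_sum s fr σ T v : LSum s fr None σ (decide f Tx σ T v) [::] None.
Proof.
split=> //.
+ by move=> t0 T0 H; left.
+ by move=> T0 x H; left.
+ by move=> t0; left.
Qed.

Lemma cat_split {A : Type} (X Y p q : seq A) (M : A) : X ++ Y = p ++ M :: q ->
  (exists q', X = p ++ M :: q') \/ (exists p', p = X ++ p' /\ Y = p' ++ M :: q).
Proof.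
elim: X p => [|x X IH] [|y p] //=.
- by move=> ->; right; exists [::].
- by move=> ->; right; exists (y :: p).
- by case=> -> _; left; exists X.
- case=> -> /IH [[q' ->]|[p' [-> ->]]]; first by left; exists q'.
  by right; exists p'.
Qed.

Lemma In_behead {A : Type} (M : A) l : In M (behead l) -> In M l.
Proof. by case: l => //= x l H; right. Qed.

Lemma In_catP {A : Type} (M : A) l l' : In M (l ++ l') -> In M l \/ In M l'.
Proof. exact: List.in_app_or. Qed.

Lemma In_cat_l {A : Type} (M : A) l l' : In M l -> In M (l ++ l').
Proof. by move=> H; apply: List.in_or_app; left. Qed.

Lemma In_cat_r {A : Type} (M : A) l l' : In M l' -> In M (l ++ l').
Proof. by move=> H; apply: List.in_or_app; right. Qed.

Record WSum (w w' : WW) (s : Server) (σ' : SS) (out : seq Msg)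
    (ack : option (Tx * nat)) (popc : option (option Server)) : Prop := {
  ws_sst : forall x, sst w' x = if x == s then σ' else sst w x;
  ws_chan : forall a b, chan w' a b =
     (if popc is Some (Some a0) then
        (if (a == a0) && (b == s) then behead (chan w a b) else chan w a b)
      else chan w a b) ++ (if a == s then out else [::]);
  ws_cchan : forall T b M, In M (cchan w' T b) -> In M (cchan w T b);
  ws_cconf : forall T, cconfirm w' T = cconfirm w T;
  ws_acked : forall T x k, acked w' T x k <-> acked w T x k \/ (ack = Some (T, k) /\ x = s)
}.

Arguments ws_sst {w w' s σ' out ack popc}. Arguments ws_chan {w w' s σ' out ack popc}.
Arguments ws_cchan {w w' s σ' out ack popc}. Arguments ws_cconf {w w' s σ' out ack popc}.
Arguments ws_acked {w w' s σ' out ack popc}.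

Definition Link (w : WW) (s : Server) (popc : option (option Server)) (from : option Server)
    (mo : option Msg) :=
  match popc with
  | None => mo = None
  | Some None => from = None /\ exists T0 m rest, mo = Some m /\ cchan w T0 s = m :: rest
  | Some (Some a) => from = Some a /\ exists m rest, mo = Some m /\ chan w a s = m :: rest
  end.

Lemma Mono_server w w' s σ' out ack popc from mo :
  s \notin Byz -> WSum w w' s σ' out ack popc -> LSum s from mo (sst w s) σ' out ack ->
  (forall T v, decided (sst w s) T v -> decided σ' T v) -> Mono w w'.
Proof.
move=> cs W L D; split.
- move=> a _; rewrite (ws_sst W); case: eqP => [->|//]; exact: (ls_clock L).
- move=> T a k /(ws_acked W) [H|[/(ls_ack L) [_ ->] ->]]; [by left|by right].
- by move=> T a k H; apply/(ws_acked W); left.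
- by move=> T t; rewrite (ws_cconf W).
- by move=> x T v _; rewrite (ws_sst W); case: eqP => [->|//]; exact: D.
Qed.

Lemma InvF_server w w' s σ' out ack popc from mo :
  InvF w -> s \notin Byz -> Mono w w' -> WSum w w' s σ' out ack popc -> Link w s popc from mo ->
  LSum s from mo (sst w s) σ' out ack -> InvF w'.
Proof.
move=> I cs M W Lk L.
have msgC : forall T t, mo = Some (MConfirm T t) -> cconfirm w T = Some t.
  move=> T t E; move: Lk; destruct popc as [[a|]|] => /=.
  - case=> _ [m [rest [E' H]]]; move: E; rewrite E' => -[Em]; subst m.
    apply: (i_cc2 I a s); rewrite H; by left.
  - case=> _ [T0 [m [rest [E' H]]]]; move: E; rewrite E' => -[Em]; subst m.
    apply: (i_cc3 I T0 s); rewrite H; by left.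
  - by rewrite E.
have head : forall a m, from = Some a -> mo = Some m ->
   popc = Some (Some a) /\ chan w a s = m :: behead (chan w a s).
  move=> a m Ef Em; move: Lk; destruct popc as [[a0|]|] => /=.
  - case=> Ef' [m' [rest [E' H]]]; move: Ef; rewrite Ef' => -[<-]; move: Em; rewrite E' => -[<-].
    by rewrite H.
  - by case=> Ef'; rewrite Ef' in Ef.
  - by rewrite Em.
have propL : forall x a T k, proposed (sst w x) a T k -> proposed (sst w' x) a T k.
  by move=> x a T k; rewrite (ws_sst W); case: eqP => [->|//]; exact: (ls_prop L).
have clkL : forall a, correct a -> clock (sst w a) <= clock (sst w' a) by case: M.
have liftC3 : forall x a T, correct a -> (exists t, cconfirm w T = Some t /\ t <= clock (sst w a) /\
        forall T' k, acked w T' a k -> k < t -> proposed (sst w x) a T' k) ->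
     exists t, cconfirm w' T = Some t /\ t <= clock (sst w' a) /\
        forall T' k, acked w' T' a k -> k < t -> proposed (sst w' x) a T' k.
  move=> x a T ca [t [h1 [h2 h3]]]; exists t; split; first by rewrite (ws_cconf W).
  split; first exact: leq_trans h2 (clkL a ca).
  move=> T' k hk hkt; apply: propL; apply: (h3 T' k _ hkt).
  exact: (@acked_lift w w' a t T' k M h2 hk hkt).
split.
-
  move=> T t; rewrite (ws_cconf W) => /(i_cc1 I) [A [hA HA]]; exists A; split=> // a aA ca.
  have [k [hk hkt]] := HA a aA ca; exists k; split=> //; apply/(ws_acked W); by left.
-
  move=> a b T t; rewrite (ws_chan W) (ws_cconf W) => /(@In_catP Msg) [H|].
  + apply: (i_cc2 I a b); move: H; destruct popc as [[a0|]|]; [|by []|by []].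
    case: ifP => // _; exact: In_behead.
  + case: eqP => [_ /(ls_outC L) [/msgC //]|_ []].
-
  by move=> T' b T t /(ws_cchan W) /(i_cc3 I); rewrite (ws_cconf W).
-
  move=> x t T cx; rewrite (ws_sst W) (ws_cconf W); case: eqP => [_|_] /=; last exact: (i_conf I).
  by case/(ls_conf L) => [/(i_conf I s t T cs)|/msgC].
-
  move=> a b T k ca cb /(ws_acked W) [H|].
  + case: (i_C1 I a b T k ca cb H) => [/propL|Hin]; first by left.
    rewrite (ws_chan W).
    destruct popc as [[a0|]|]; try by right; apply: In_cat_l.
    case: ifP => [/andP [/eqP ea /eqP eb]|_]; last by right; apply: In_cat_l.
    subst a b; move: Lk => /= [Ef [m [rest [Em Hc]]]].
    move: Hin; rewrite Hc /= => -[Hm|Hr]; last by right; apply: In_cat_l.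
    left; rewrite (ws_sst W) eqxx; apply: (ls_propP L _ _ _ Ef); by rewrite Em Hm.
  + case=> /(ls_ack L) [Em ->] ->; right; rewrite (ws_chan W) eqxx; apply: In_cat_r.
    exact: (ls_outP L).
-
  move=> a b p q T t ca cb; rewrite (ws_chan W) => /(@cat_split Msg) [[q' Hx]|[p' [Hp Hy]]].
  + have [ht HA] : t <= clock (sst w a) /\ forall T' k, acked w T' a k -> k < t ->
        proposed (sst w' b) a T' k \/ In (MProposed T' k) p.
      move: Hx; destruct popc as [[a0|]|]; last first.
      * move=> Hx; have [h1 h2] := i_C2 I a b p q' T t ca cb Hx; split=> // T' k hk hkt.
        by case: (h2 T' k hk hkt) => [/propL|]; [left|right].
      * move=> Hx; have [h1 h2] := i_C2 I a b p q' T t ca cb Hx; split=> // T' k hk hkt.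
        by case: (h2 T' k hk hkt) => [/propL|]; [left|right].
      case: ifP => [/andP [/eqP ea /eqP eb]|_] Hx; last first.
        have [h1 h2] := i_C2 I a b p q' T t ca cb Hx; split=> // T' k hk hkt.
        by case: (h2 T' k hk hkt) => [/propL|]; [left|right].
      subst a b; move: Lk => /= [Ef [m [rest [Em Hc]]]].
      move: Hx; rewrite Hc /= => Hx.
      have := i_C2 I a0 s (m :: p) q' T t ca cb; rewrite Hc Hx => /(_ erefl) [h1 h2].
      split=> // T' k hk hkt; case: (h2 T' k hk hkt) => [/propL|/= [Hm|]]; [by left| |by right].
      left; rewrite (ws_sst W) eqxx; apply: (ls_propP L _ _ _ Ef); by rewrite Em Hm.
    split; first exact: leq_trans ht (clkL a ca).
    move=> T' k hk hkt; apply: (HA T' k _ hkt); exact: (@acked_lift w w' a t T' k M ht hk hkt).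
  + move: Hy; case: eqP => [ea|_]; last by case: p' {Hp}.
    subst a => Hy.
    have [Em ht] : mo = Some (MConfirm T t) /\ t <= clock σ'.
      by apply: (ls_outC L); rewrite Hy; apply: In_cat_r; left.
    split; first by rewrite (ws_sst W) eqxx.
    move=> T' k /(ws_acked W) [hk|[/(ls_ack L) [Em' _] _]]; last by rewrite Em' in Em.
    move=> _; case: (i_C1 I s b T' k cs cb hk) => [/propL|Hin]; first by left.
    right; rewrite Hp; apply: In_cat_l.
    move: Hin; destruct popc as [[a0|]|]; [|by []|by []].
    case: ifP => // /andP [/eqP ea /eqP eb]; subst a0 b.
    move: Lk => /= [Ef [m [rest [Em2 Hc]]]]; rewrite Hc /= => -[Hm|//].
    by move: Em; rewrite Em2 Hm.
-
  move=> x a T cx ca Hx; case: (eqVneq x s) => [ex|nx]; last first.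
    have H : a \in cwit (sst w x) T by move: Hx; rewrite (ws_sst W) (negbTE nx).
    exact: liftC3 x a T ca (i_C3 I x a T cx ca H).
  subst x; have : a \in cwit σ' T by move: Hx; rewrite (ws_sst W) eqxx.
  case/(ls_cwit L) => [H|[Ef [t Em]]].
    exact: liftC3 s a T ca (i_C3 I s a T cs ca H).
  apply: liftC3 => //.
  have [_ Hc] := head a _ Ef Em.
  have := i_C2 I a s [::] (behead (chan w a s)) T t ca cs Hc => -[h1 h2].
  exists t; split; first exact: msgC.
  split=> // T' k hk hkt; by case: (h2 T' k hk hkt).
-
  move=> x t T0 cx Hx; case: (eqVneq x s) => [ex|nx]; last first.
    have H : pending (sst w x) t T0 by move: Hx; rewrite (ws_sst W) (negbTE nx).
    apply: (GoodW_lift M _ (i_C4 I x t T0 cx H)) => y; by rewrite (ws_sst W) (negbTE nx).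
  subst x; have E : pending (sst w' s) t = pending σ' t by rewrite (ws_sst W) eqxx.
  rewrite E; rewrite E in Hx.
  case: (ls_pend L t) => [Heq|[T [Em [Hq Hsup]]]].
    have H := (Heq T0).1 Hx; apply: (GoodW_lift M _ (i_C4 I s t T0 cs H)) => y.
    exact: (Heq y).2.
  apply: (GoodW_lift M Hsup).
  exists (cwit (confirm_core (sst w s) from T t) T); split; first by rewrite Hq.
  move=> a aW ca.
  have [ht HP] : t <= clock (sst w a) /\
      forall T' k, acked w T' a k -> k < t -> proposed (sst w s) a T' k.
    move: aW; rewrite /= eqxx.
    have gen : a \in cwit (sst w s) T -> t <= clock (sst w a) /\
        forall T' k, acked w T' a k -> k < t -> proposed (sst w s) a T' k.
      move=> H; have [t' [h1 [h2 h3]]] := i_C3 I s a T cs ca H.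
      by move: h1 h2 h3; rewrite (msgC _ _ Em) => -[<-].
    case Ef: from => [a0|] //.
    rewrite in_setU1 => /orP [/eqP ea|//]; subst a0.
    have [_ Hc] := head a _ Ef Em.
    have := i_C2 I a s [::] (behead (chan w a s)) T t ca cs Hc => -[h1 h2].
    by split=> // T' k hk hkt; case: (h2 T' k hk hkt).
  split=> // T' k hk hkt; exists a, k; split=> //; split; [exact: HP hk hkt|exact: ltnW].
Qed.

Lemma rcons_split {A : Type} (l p q : seq A) (e x : A) : rcons l e = p ++ x :: q ->
  (p = l /\ x = e /\ q = [::]) \/ (exists q', l = p ++ x :: q').
Proof.
rewrite -cats1 => /(@cat_split A) [[q' ->]|[p' [-> H]]]; first by right; exists q'.
left; case: p' H => [[<- <-]|y p' [_]]; first by rewrite cats0.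
by case: p'.
Qed.

Lemma InvL_server w w' s σ' out ack popc :
  InvF w -> InvL w -> s \notin Byz -> Mono w w' -> WSum w w' s σ' out ack popc ->
  (forall x x' T v v', correct x -> correct x' ->
     decided (sst w' x) T v -> decided (sst w' x') T v' -> v = v') ->
  (log σ' = log (sst w s) \/
   (exists T, log σ' = rcons (log (sst w s)) (T, true) /\ apply_ok (sst w s) T) \/
   (exists T, log σ' = rcons (log (sst w s)) (T, false) /\ ~ in_log (sst w s) T)) ->
  InvL w'.
Proof.
move=> IF I cs M W Dec LC.
have [Mclk Mack Macked Mcc Mdec] := M.
have old1 : forall x T, correct x -> (T, true) \in log (sst w x) ->
    committed (sst w' x) T /\ exists t, cconfirm w' T = Some t.
  move=> x T cx /(i_log1 I x T cx) [h1 [t h2]]; split; first exact: Mdec.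
  by exists t; apply: Mcc.
have oldlog : forall x p q T2 T1, correct x -> log (sst w x) = p ++ (T2, true) :: q ->
      T1 != T2 -> conflict T2 T1 -> (forall b, (T1, b) \notin p) ->
      cancelled (sst w' x) T1 \/
      (exists t2 t1, cconfirm w' T2 = Some t2 /\ cconfirm w' T1 = Some t1 /\ lexlt t2 T2 t1 T1) \/
      (exists t2, cconfirm w' T2 = Some t2 /\ GoodW w' t2 (fun T' => T' <> T1)).
  move=> x p q T2 T1 cx E n c nb; case: (i_log I x p q T2 T1 cx E n c nb).
  - by move=> H; left; apply: Mdec.
  - case=> [[t2 [t1 [h1 [h2 h3]]]]|[t2 [h1 h2]]].
    + by right; left; exists t2, t1; split; [apply: Mcc|split; [apply: Mcc|]].
    + right; right; exists t2; split; first exact: Mcc.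
      exact: (GoodW_lift M _ h2).
have sameL : forall x, correct x -> log (sst w' x) = log (sst w x) \/ x = s.
  move=> x _; rewrite (ws_sst W); case: eqP => [->|_]; by [right|left].
split.
- exact: Dec.
- move=> x T cx; case: (sameL x cx) => [->|ex]; first exact: old1.
  subst x; rewrite [sst w' s](ws_sst W) eqxx.
  case: LC => [->|[[T0 [-> [t [h1 [h2 _]]]]]|[T0 [-> _]]]].
  + by move=> H; have := old1 s T cs H; rewrite (ws_sst W) eqxx.
  + rewrite mem_rcons in_cons => /orP [/eqP [->]|H].
      split; first by have := Mdec s T0 true cs h1; rewrite (ws_sst W) eqxx.
      by exists t; apply: Mcc; exact: (i_conf IF s t T0 cs h2).
    by have := old1 s T cs H; rewrite (ws_sst W) eqxx.
  + rewrite mem_rcons in_cons => /orP [/eqP [_ //]|H].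
    by have := old1 s T cs H; rewrite (ws_sst W) eqxx.
- move=> x cx; case: (sameL x cx) => [->|ex]; first exact: (i_uniq I).
  subst x; rewrite [sst w' s](ws_sst W) eqxx.
  have nin : forall T : Tx, ~ in_log (sst w s) T -> T \notin map fst (log (sst w s)).
    move=> T nl; apply/negP => /mapP [[T' b'] H /= E]; apply: nl; exists b'; by rewrite E.
  case: LC => [->|[[T0 [-> [t [_ [_ [_ [nl _]]]]]]]|[T0 [-> nl]]]]; first exact: (i_uniq I).
  + by rewrite map_rcons rcons_uniq (nin T0 nl) (i_uniq I).
  + by rewrite map_rcons rcons_uniq (nin T0 nl) (i_uniq I).
- move=> x p q T2 T1 cx; case: (sameL x cx) => [->|ex]; first exact: oldlog.
  subst x; have Ecan : cancelled (sst w' s) T1 = cancelled σ' T1 by rewrite (ws_sst W) eqxx.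
  have El : log (sst w' s) = log σ' by rewrite (ws_sst W) eqxx.
  rewrite El.
  case: LC => [->|[[T0 [-> AO]]|[T0 [-> nl]]]].
  + move=> E n c nb; have := oldlog s p q T2 T1 cs E n c nb; by rewrite Ecan.
  + move/(@rcons_split (Tx * bool)) => [[Ep [[ET] Eq]]|[q' E]]; last first.
      move=> n c nb; have := oldlog s p q' T2 T1 cs E n c nb; by rewrite Ecan.
    subst p T0 q => n c nb.
    have nl1 : ~ in_log (sst w s) T1 by case=> b; apply/negP.
    case: AO => t [hc [hconf [[T' hp] [nl2 Hall]]]].
    have ct2 := i_conf IF s t T2 cs hconf.
    case: (Classical_Prop.classic (pending (sst w s) t T1)) => [hp1|hp1].
    * case: (Hall T1 hp1) => [//|[hcan|[//|[t0 [h0 H0]]]]].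
        by left; apply: Mdec.
      have e0 := i_conf IF s t0 T2 cs h0; rewrite ct2 in e0; case: e0 => e0; subst t0.
      right; left; case: H0 => [[t' [h' lt']]|[h' lx]].
      - by exists t, t'; split; [exact: Mcc|split; [apply: Mcc; exact: (i_conf IF s t' T1 cs h')|left]].
      - by exists t, t; split; [exact: Mcc|split; [apply: Mcc; exact: (i_conf IF s t T1 cs h')|right]].
    * right; right; exists t; split; first exact: Mcc.
      apply: (GoodW_lift M _ (i_C4 IF s t T' cs hp)) => y hy ey; subst y; exact: hp1 hy.
  + move/(@rcons_split (Tx * bool)) => [[Ep [[ET] Eq]]|[q' E]]; last first.
      move=> n c nb; have := oldlog s p q' T2 T1 cs E n c nb; by rewrite Ecan.
    by [].
Qed.

Arguments upd_s {f Tx}. Arguments bcast {f Tx}. Arguments pop_chan {f Tx}.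
Arguments pop_cchan {f Tx}. Arguments record_ack {f Tx}. Arguments after_recv {f Tx}.

Lemma after_recv_fields (w : WW) (s : Server) (σ' : SS) (out : seq Msg) (ack : option (Tx * nat)) :
  let w' := after_recv w s σ' out ack in
  [/\ forall x, sst w' x = if x == s then σ' else sst w x,
      forall a b, chan w' a b = chan w a b ++ (if a == s then out else [::]),
      cchan w' = cchan w, cconfirm w' = cconfirm w &
      forall T x k, acked w' T x k <-> acked w T x k \/ (ack = Some (T, k) /\ x = s)].
Proof.
rewrite /after_recv /=; case: ack => [[T k]|] /=; split=> //.
- by move=> a b; case: ifP => // _; rewrite cats0.
- move=> T0 x k0; split; first by case=> [[-> [-> ->]]|H]; [right|left].
  by case=> [H|[[-> ->] ->]]; [right|left].
- by move=> a b; case: ifP => // _; rewrite cats0.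
- by move=> T0 x k0; split; [left|case=> // -[]].
Qed.

Lemma WSum_client (w : WW) T (s : Server) m rest (σ' : SS) out ack : cchan w T s = m :: rest ->
  WSum w (after_recv (pop_cchan w T s rest) s σ' out ack) s σ' out ack (Some None).
Proof.
move=> Hc; have [h1 h2 h3 h4 h5] := after_recv_fields (pop_cchan w T s rest) s σ' out ack.
split=> //.
- move=> T0 b M; rewrite h3 /=; case: ifP => // /andP [/eqP -> /eqP ->].
  by rewrite Hc => H; right.
- by rewrite h4.
Qed.

Lemma WSum_server (w : WW) (a s : Server) m rest (σ' : SS) out ack : chan w a s = m :: rest ->
  WSum w (after_recv (pop_chan w a s rest) s σ' out ack) s σ' out ack (Some (Some a)).
Proof.
move=> Hc; have [h1 h2 h3 h4 h5] := after_recv_fields (pop_chan w a s rest) s σ' out ack.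
split=> //.
- move=> a' b'; rewrite h2 /=; case: ifP => // /andP [/eqP -> /eqP ->].
  by rewrite Hc.
- by rewrite h3.
- by rewrite h4.
Qed.

Lemma WSum_local (w : WW) (s : Server) (σ' : SS) out :
  WSum w (after_recv w s σ' out None) s σ' out None None.
Proof.
have [h1 h2 h3 h4 h5] := after_recv_fields w s σ' out None.
split=> //; try by rewrite ?h3 ?h4.
Qed.

Lemma WSum_decide (w : WW) (s : Server) (σ' : SS) :
  WSum w (upd_s w s σ') s σ' [::] None None.
Proof.
split=> //=.
- by move=> a b; rewrite if_same cats0.
- by move=> T x k; split; [left|case=> // -[]].
Qed.

Lemma Inv_env (w w' : WW) : InvF w -> InvL w ->
  (forall x, sst w' x = sst w x) ->
  (forall T x k, acked w' T x k <-> acked w T x k) ->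
  (forall T t, cconfirm w T = Some t -> cconfirm w' T = Some t) ->
  (forall T t, cconfirm w' T = Some t -> cconfirm w T = Some t \/
     exists A : {set Server}, 2 * f + 1 <= #|A| /\
       forall a, a \in A -> correct a -> exists k, acked w T a k /\ k < t) ->
  (forall a b, correct a -> chan w' a b = chan w a b) ->
  (forall a b T t, In (MConfirm T t) (chan w' a b) ->
     cconfirm w' T = Some t \/ In (MConfirm T t) (chan w a b)) ->
  (forall T' b T t, In (MConfirm T t) (cchan w' T' b) ->
     cconfirm w' T = Some t \/ In (MConfirm T t) (cchan w T' b)) ->
  InvF w' /\ InvL w'.
Proof.
move=> IF IL Hs Ha Hc Hc2 Hch Hm1 Hm2.
have M : Mono w w'.
  split.
  - by move=> a _; rewrite Hs.
  - by move=> T a k /Ha; left.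
  - by move=> T a k /Ha.
  - exact: Hc.
  - by move=> x T v _; rewrite Hs.
have liftA : forall T t, (exists A : {set Server}, 2 * f + 1 <= #|A| /\
       forall a, a \in A -> correct a -> exists k, acked w T a k /\ k < t) ->
     exists A : {set Server}, 2 * f + 1 <= #|A| /\
       forall a, a \in A -> correct a -> exists k, acked w' T a k /\ k < t.
  move=> T t [A [hA HA]]; exists A; split=> // a aA ca.
  by have [k [hk hkt]] := HA a aA ca; exists k; split=> //; apply/Ha.
split; split.
- move=> T t /Hc2 [/(i_cc1 IF)|] H; exact: liftA.
- by move=> a b T t /Hm1 [//|/(i_cc2 IF)/Hc].
- by move=> T' b T t /Hm2 [//|/(i_cc3 IF)/Hc].
- by move=> s t T cs; rewrite Hs => /(i_conf IF s t T cs)/Hc.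
- move=> a s T k ca cs /Ha; rewrite Hs Hch //; exact: (i_C1 IF).
- move=> a s p q T t ca cs; rewrite Hch // !Hs => /(i_C2 IF a s p q T t ca cs) [h1 h2].
  by split=> // T' k /Ha; apply: h2.
- move=> s a T cs ca; rewrite !Hs => /(i_C3 IF s a T cs ca) [t [h1 [h2 h3]]].
  by exists t; split; [exact: Hc|split=> // T' k /Ha; apply: h3].
- move=> s t T0 cs; rewrite !Hs => /(i_C4 IF s t T0 cs); exact: GoodW_lift M _.
- by move=> s s' T v v' cs cs'; rewrite !Hs; exact: (i_dec IL).
- move=> s T cs; rewrite !Hs => /(i_log1 IL s T cs) [h1 [t h2]]; split=> //.
  by exists t; exact: Hc.
- by move=> s cs; rewrite Hs; exact: (i_uniq IL).
- move=> s p q T2 T1 cs; rewrite !Hs => E n c nb.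
  case: (i_log IL s p q T2 T1 cs E n c nb) => [H|[[t2 [t1 [h1 [h2 h3]]]]|[t2 [h1 h2]]]].
  + by left.
  + by right; left; exists t2, t1; split; [exact: Hc|split; [exact: Hc|]].
  + by right; right; exists t2; split; [exact: Hc|exact: GoodW_lift M _ h2].
Qed.

Lemma In_rcons {A : Type} (M x : A) l : In M (rcons l x) -> In M l \/ M = x.
Proof. by rewrite -cats1 => /(@In_catP A) [H|[<-|[]]]; [left|right]. Qed.

Arguments In_rcons {A M x l}.
Arguments srecv_sum {s from m σ σ' out ack}.
Arguments slocal_sum s fr {σ σ' out}.
Arguments Mono_server {w w' s σ' out ack popc from mo}.
Arguments InvF_server {w w' s σ' out ack popc from mo}.
Arguments InvL_server {w w' s σ' out ack popc}.
Arguments WSum_client {w T s m rest} σ' out ack.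
Arguments WSum_server {w a s m rest} σ' out ack.
Arguments client_propose {f Tx}. Arguments client_confirm {f Tx}. Arguments send1 {f Tx}.

Lemma Inv_step w w' : InvF w -> InvL w -> step w w' -> InvF w' /\ InvL w'.
Proof.
move=> IF IL hs; move: IF IL; case: hs.
-
  move=> T {}w _ IF IL. refine (@Inv_env w (client_propose w T) IF IL _ _ _ _ _ _ _); try by [].
  + by move=> T0 t ->; left.
  + by move=> a b T0 t H; right.
  + move=> T' b T0 t /=; case: ifP => _ H; last by right.
    by case: (In_rcons H) => [|//]; right.
-
  move=> T S K {}w _ hN hS hA IF IL.
  refine (@Inv_env w (client_confirm w T (hat_t f S K)) IF IL _ _ _ _ _ _ _); try by [].
  + move=> T0 t /=; case: eqP => [->|//]; by rewrite hN.
  + move=> T0 t /=; case: eqP => [->|_]; last by left.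
    case=> <-; right; have [A [h1 [h2 h3]]] := @hat_t_prop f S K hS.
    exists A; split=> // a aA ca; exists (K a); split; last exact: h3.
    by apply: hA => //; exact: (subsetP h2).
  + by move=> a b T0 t H; right.
  + move=> T' b T0 t /=; case: ifP => /eqP E H; last by right.
    case: (In_rcons H) => [|[-> ->]]; [by right|left]; by rewrite eqxx.
-
  move=> T s m rest σ' out ack {}w cs Hc Hr IF IL.
  have [L El Ed] := srecv_sum Hr.
  have W := WSum_client σ' out ack Hc.
  have M := Mono_server cs W L (fun T0 v => (Ed T0 v).2).
  split.
  + apply: (InvF_server IF cs M W _ L); split=> //; by exists T, m, rest.
  + apply: (InvL_server IF IL cs M W); last by left.
    move=> x x' T0 v v' cx cx'; rewrite !(ws_sst W).
    case: eqP => _; case: eqP => _ /=; rewrite ?Ed; exact: (i_dec IL).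
-
  move=> a s m rest σ' out ack {}w cs Hc Hr IF IL.
  have [L El Ed] := srecv_sum Hr.
  have W := WSum_server σ' out ack Hc.
  have M := Mono_server cs W L (fun T0 v => (Ed T0 v).2).
  split.
  + apply: (InvF_server IF cs M W _ L); split=> //; by exists m, rest.
  + apply: (InvL_server IF IL cs M W); last by left.
    move=> x x' T0 v v' cx cx'; rewrite !(ws_sst W).
    case: eqP => _; case: eqP => _ /=; rewrite ?Ed; exact: (i_dec IL).
-
  move=> s σ' out {}w cs Hl IF IL.
  have [L Ed LC] := slocal_sum s None Hl.
  change (InvF (after_recv w s σ' out None) /\ InvL (after_recv w s σ' out None)).
  have W := WSum_local w s σ' out.
  have M := Mono_server cs W L (fun T0 v => (Ed T0 v).2).
  split.
  + exact: (InvF_server IF cs M W _ L).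
  + apply: (InvL_server IF IL cs M W) => //.
    move=> x x' T0 v v' cx cx'; rewrite !(ws_sst W).
    case: eqP => _; case: eqP => _ /=; rewrite ?Ed; exact: (i_dec IL).
-
  move=> s T v {}w cs _ Hnd Hag _ IF IL.
  have W := WSum_decide w s (decide f Tx (sst w s) T v).
  have L := decide_sum s None (sst w s) T v.
  have M := Mono_server cs W L (fun T0 v0 H => or_intror H).
  split.
  + exact: (InvF_server IF cs M W _ L).
  + apply: (InvL_server IF IL cs M W); last by left.
    move=> x x' T0 v0 v0' cx cx'; rewrite !(ws_sst W).
    case: eqP => ex; case: eqP => ex' /= H1 H2.
    * subst x x'; case: H1 => [[e1 e2]|H1]; case: H2 => [[e3 e4]|H2].
      - by subst.
      - by subst T0; case: (Hnd _ H2).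
      - by subst T0; case: (Hnd _ H1).
      - exact: (i_dec IL) H1 H2.
    * subst x; case: H1 => [[e1 e2]|H1]; last exact: (i_dec IL) H1 H2.
      by subst T0 v0; rewrite (Hag _ _ cx' H2).
    * subst x'; case: H2 => [[e1 e2]|H2]; last exact: (i_dec IL) H1 H2.
      by subst T0 v0'; rewrite (Hag _ _ cx H1).
    * exact: (i_dec IL) H1 H2.
-
  move=> b s m {}w bB hm IF IL.
  refine (@Inv_env w (send1 w b s m) IF IL _ _ _ _ _ _ _); try by [].
  + by move=> T t ->; left.
  + move=> a b' ca /=; case: ifP => // /andP [/eqP ea _]; subst a.
    by rewrite bB in ca.
  + move=> a b' T t /=; case: ifP => _ H; last by right.
    case: (In_rcons H) => [|Em]; first by right.
    by left; move: hm; rewrite -Em.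
  + by move=> T' b' T t H; right.
Qed.

Lemma Inv_init : InvF (init_w f Tx) /\ InvL (init_w f Tx).
Proof.
split; split=> //=.
all: try by move=> a s p q T t _ _; case: p.
all: try by move=> s a T _ _; rewrite in_set0.
all: try by move=> s p q T2 T1 _; case: p.
Qed.

Lemma Inv_reach w : reachable f Tx Key rset wset ltx Byz w -> InvF w /\ InvL w.
Proof.
elim=> [|w0 w1 _ [IF IL] hs]; first exact: Inv_init.
exact: Inv_step IF IL hs.
Qed.

Lemma before_total (l : seq (Tx * bool)) x y : x \in l -> y \in l -> x != y ->
  before l x y \/ before l y x.
Proof.
elim: l => [//|z l IH]; rewrite !in_cons => hx hy nxy.
case: (eqVneq x z) => [exz|nxz].
  subst z; have : y \in l by move: hy; rewrite eq_sym (negbTE nxy).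
  case/splitPr => p q; left; by exists [::], p, q.
case: (eqVneq y z) => [eyz|nyz].
  subst z; have : x \in l by move: hx; rewrite (negbTE nxz).
  case/splitPr => p q; right; by exists [::], p, q.
move: hx hy; rewrite (negbTE nxz) (negbTE nyz) /= => hx hy.
case: (IH hx hy nxy) => [[l1 [l2 [l3 ->]]]|[l1 [l2 [l3 ->]]]].
- by left; exists (z :: l1), l2, l3.
- by right; exists (z :: l1), l2, l3.
Qed.

Lemma contra_good (hByz : #|Byz| <= f) w tA B tB : InvF w ->
  GoodW w tA (fun T' => T' <> B) -> cconfirm w B = Some tB -> tB <= tA -> False.
Proof.
move=> IF [W [hW HW]] /(i_cc1 IF) [A [hA HA]] hle.
have hcard : f < #|W :&: A|.
  have := cardsUI W A; have := max_card (W :|: A); rewrite card_ord => h1 h2.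
  lia.
case: (boolP (W :&: A \subset Byz)) => [/subset_leq_card|/subsetPn [a]]; first lia.
rewrite in_setI => /andP [aW aA] ca.
have [ht HP] := HW a aW ca.
have [k [hk hkt]] := HA a aA ca.
exact: (HP B k hk (leq_trans hkt hle)).
Qed.

Arguments contra_good hByz {w tA B tB}.

Lemma final (ltx_irr : irreflexive ltx) (ltx_trans : transitive ltx) (hByz : #|Byz| <= f)
  w s1 s2 T1 T2 : reachable f Tx Key rset wset ltx Byz w -> correct s1 -> correct s2 ->
  conflict T1 T2 ->
  before (log (sst w s1)) (T1, true) (T2, true) ->
  (T1, true) \in log (sst w s2) -> (T2, true) \in log (sst w s2) ->
  before (log (sst w s2)) (T1, true) (T2, true).
Proof.
move=> /Inv_reach [IF IL] c1 c2 cf [l1 [l2 [l3 E1]]] in1 in2.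
have cf' : conflict T2 T1 by case: cf => H; [right|left].
have U1 := i_uniq IL s1 c1; rewrite E1 map_cat cat_uniq /= in U1.
case/and3P: U1 => _ hn /andP [hT1 _].
have nT12 : T2 != T1.
  apply/eqP => e; subst T2; move: hT1; rewrite map_cat mem_cat /= in_cons eqxx.
  by rewrite orbT.
have nb1 : forall b, (T2, b) \notin l1.
  move=> b; apply/negP => H; move: hn; rewrite /= negb_or => /andP [_].
  rewrite map_cat has_cat /= => /norP [_ /norP [H2 _]].
  by move: H2; rewrite /= (map_f fst H).
have hT1in : (T1, true) \in log (sst w s1) by rewrite E1 mem_cat in_cons eqxx orbT.
have hT2in : (T2, true) \in log (sst w s1) by rewrite E1 mem_cat in_cons mem_cat in_cons eqxx !orbT.
have [cm12 [t2 ct2]] := i_log1 IL s1 T2 c1 hT2in.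
have [cm11 [t1 ct1]] := i_log1 IL s1 T1 c1 hT1in.
have [cm22 _] := i_log1 IL s2 T2 c2 in2.
have [cm21 _] := i_log1 IL s2 T1 c2 in1.
have R1 := i_log IL s1 l1 (l2 ++ (T2, true) :: l3) T1 T2 c1 E1 nT12 cf nb1.
have nx : (T1, true) != (T2, true) by apply/eqP => -[e]; rewrite e eqxx in nT12.
case: (@before_total _ _ _ in1 in2 nx) => [//|[m1 [m2 [m3 E2]]]].
have nT21 : T1 != T2 by rewrite eq_sym.
have nb2 : forall b, (T1, b) \notin m1.
  move=> b; apply/negP => H.
  have := i_uniq IL s2 c2; rewrite E2 map_cat cat_uniq /= => /and3P [_ hn2 _].
  move: hn2; rewrite negb_or => /andP [_]; rewrite map_cat has_cat /= => /norP [_ /norP [H2 _]].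
  by move: H2; rewrite (map_f fst H).
have R2 := i_log IL s2 m1 (m2 ++ (T1, true) :: m3) T2 T1 c2 E2 nT21 cf' nb2.
exfalso.
have F1 : ~ cancelled (sst w s1) T2 by move=> H; have := i_dec IL s1 s1 T2 _ _ c1 c1 H cm12.
have F2 : ~ cancelled (sst w s2) T1 by move=> H; have := i_dec IL s2 s2 T1 _ _ c2 c2 H cm21.
have L1 : (lexlt t1 T1 t2 T2) \/ GoodW w t1 (fun T' => T' <> T2).
  case: R1 => [//|[[a1 [b1 [h1 [h2 lx1]]]]|[a1 [h1 G1]]]].
  - by move: h1 h2; rewrite ct1 ct2 => -[e1] [e2]; subst; left.
  - by move: h1; rewrite ct1 => -[e1]; subst; right.
have L2 : (lexlt t2 T2 t1 T1) \/ GoodW w t2 (fun T' => T' <> T1).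
  case: R2 => [//|[[a1 [b1 [h1 [h2 lx1]]]]|[a1 [h1 G1]]]].
  - by move: h1 h2; rewrite ct1 ct2 => -[e1] [e2]; subst; left.
  - by move: h1; rewrite ct2 => -[e1]; subst; right.
case: L1 => [lx1|G1]; case: L2 => [lx2|G2].
- case: lx1 => [lt1|[e1 x1]]; case: lx2 => [lt2|[e2 x2]].
  + by move: (ltn_trans lt1 lt2); rewrite ltnn.
  + by rewrite e2 ltnn in lt1.
  + by rewrite e1 ltnn in lt2.
  + by have := ltx_trans T2 T1 T1 x1 x2; rewrite ltx_irr.
- apply: (contra_good hByz IF G2 ct1); case: lx1 => [/ltnW|[-> _]] //.
- apply: (contra_good hByz IF G1 ct2); case: lx2 => [/ltnW|[-> _]] //.
- case: (leqP t1 t2) => h.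
  + exact: (contra_good hByz IF G2 ct1).
  + exact: (contra_good hByz IF G1 ct2 (ltnW h)).
Qed.

End Proof.

Theorem lemma5 (f : nat) (Tx : eqType) (Key : Type) (rset wset : Tx -> Key -> Prop)
  (ltx : rel Tx)
  (ltx_irr : irreflexive ltx) (ltx_trans : transitive ltx)
  (ltx_total : forall x y : Tx, x != y -> ltx x y || ltx y x)
  (Byz : {set 'I_(4 * f + 1)}) (hByz : #|Byz| <= f)
  (w : World f Tx) (hw : reachable f Tx Key rset wset ltx Byz w)
  (s1 s2 : 'I_(4 * f + 1)) (T1 T2 : Tx) :
  s1 \notin Byz -> s2 \notin Byz ->
  conflict Tx Key rset wset T1 T2 ->
  before (log f Tx (sst f Tx w s1)) (T1, true) (T2, true) ->
  (T1, true) \in log f Tx (sst f Tx w s2) ->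
  (T2, true) \in log f Tx (sst f Tx w s2) ->
  before (log f Tx (sst f Tx w s2)) (T1, true) (T2, true).
Proof.
exact: (@final f Tx Key rset wset ltx Byz ltx_irr ltx_trans hByz w s1 s2 T1 T2 hw).
Qed.
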